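(* Let $\overline{\mathcal G_H}=\mathbb S^1_\beta\times[-\infty,\infty]_a$ with the smooth structure described in the context, let $\mu_H(\beta,a)=(1+a^2)^{-1/2}$ (extended by $0$ at $a=\pm\infty$), and let $\mathcal S_A^H(\beta,a)=(\beta+\pi+2\tan^{-1}a,\,-a)$. A function $h$ on $\overline{\mathcal G_H}$ belongs to $C^\infty_{\alpha,+}(\overline{\mathcal G_H})$ if and only if $h\in C^\infty(\overline{\mathcal G_H})$, $h=h\circ\mathcal S_A^H$, and, when $h$ is expressed in terms of the coordinates $(\beta+\tan^{-1}a,\ \mu_H)$ near $\partial\overline{\mathcal G_H}=\{a=\pm\infty\}$, all odd-order terms of the Taylor expansion of $h$ off of $\partial\overline{\mathcal G_H}$ (in the variable $\mu_H$) vanish.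
   Context: $\overline{\mathcal G_H}=\mathbb S^1_\beta\times[-\infty,\infty]_a$ is given the smooth structure of a compact manifold with boundary for which the map $\Psi_{hf}(\beta,a)=(\beta,\tan^{-1}a)$ (with $\tan^{-1}(\pm\infty)=\pm\pi/2$) is a diffeomorphism onto $\partial_+S\mathbb D_E:=\mathbb S^1_\beta\times[-\pi/2,\pi/2]_\alpha$; then $\mu_H$ is a smooth boundary defining function. Fan-beam coordinates on the boundary $\partial S\mathbb D_E$ of the unit tangent bundle of the Euclidean unit disk: $(\beta,\alpha)\in\mathbb S^1\times(\mathbb R/2\pi\mathbb Z)$ denotes the unit vector at $e^{i\beta}$ with direction $e^{i(\beta+\pi+\alpha)}$; $\partial_+S\mathbb D_E$ corresponds to $\alpha\in[-\pi/2,\pi/2]$ (inward pointing), $\partial_-S\mathbb D_E$ to $\alpha\in[\pi/2,3\pi/2]$. The scattering relation is $\mathcal S^E(\beta,\alpha)=(\beta+\pi+2\alpha,\pi-\alpha)$, and $\mathcal S^E_A(\beta,\alpha)=(\beta+\pi+2\alpha,-\alpha)$. For $u$ on $\partial_+S\mathbb D_E$, $A_+u$ is the function on $\partial S\mathbb D_E$ equal to $u$ on $\partial_+S\mathbb D_E$ and to $u\circ\mathcal S^E$ on $\partial_-S\mathbb D_E$. Define $C^\infty_\alpha(\partial_+S\mathbb D_E)=\{u\in C^\infty(\partial_+S\mathbb D_E): A_+u\in C^\infty(\partial S\mathbb D_E)\}$, $C^\infty_{\alpha,+}(\partial_+S\mathbb D_E)=\{u\in C^\infty_\alpha(\partial_+S\mathbb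 D_E): u\circ\mathcal S^E_A=u\}$, and $C^\infty_{\alpha,+}(\overline{\mathcal G_H}):=\Psi_{hf}^*C^\infty_{\alpha,+}(\partial_+S\mathbb D_E)=\{u\circ\Psi_{hf}\}$. *)

(* Defs.v *)
From Stdlib Require Import Reals Lra.
From Coquelicot Require Import Coquelicot.
Open Scope R_scope.

(** Iterated partial derivatives of f : R -> R -> R along a list of
    directions (true = first variable, false = second variable);
    the head of the list is the last derivative taken. *)
Fixpoint pder (l : list bool) (f : R -> R -> R) : R -> R -> R :=
  match l with
  | nil => f
  | cons b l' =>
      let g := pder l' f in
      if b then (fun x y => Derive (fun t => g t y) x)
           else (fun x y => Derive (fun t => g x t) y)
  end.

Definition smooth2 (f : R -> R -> R) : Prop :=
  forall (l : list bool) (x y : R),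
    ex_derive (fun t => pder l f t y) x /\
    ex_derive (fun t => pder l f x t) y /\
    continuity_2d_pt (pder l f) x y.

(** Functions on S^1_beta x ... are represented by their lifts, 2pi-periodic
    in the first variable. *)
Definition periodic_b {A : Type} (u : R -> A -> R) : Prop :=
  forall b a, u (b + 2 * PI) a = u b a.

(** F agrees with u on the closed strip R x [-pi/2, pi/2]
    (the lift of d_+ S D_E). *)
Definition strip_ext (F u : R -> R -> R) : Prop :=
  forall b a, - (PI / 2) <= a <= PI / 2 -> F b a = u b a.

(** C^infinity(d_+ S D_E) = S^1 x [-pi/2,pi/2] (manifold with boundary):
    restriction of a smooth function on a neighbourhood (here: R^2). *)
Definition C_strip (u : R -> R -> R) : Prop :=
  exists F, smooth2 F /\ strip_ext F u.

(** Reduction of alpha modulo 2pi into [-pi/2, 3pi/2). *)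
Definition red_alpha (a : R) : R :=
  2 * PI * frac_part ((a + PI / 2) / (2 * PI)) - PI / 2.

Definition SE (b a : R) : R * R := (b + PI + 2 * a, PI - a).
Definition SEA (b a : R) : R * R := (b + PI + 2 * a, - a).

(** A_+ u on d S D_E = S^1 x (R / 2pi Z), lifted to R^2:
    u on alpha in [-pi/2,pi/2], u o S^E on alpha in [pi/2, 3pi/2]. *)
Definition Aplus (u : R -> R -> R) (b a : R) : R :=
  let a' := red_alpha a in
  if Rle_dec a' (PI / 2) then u b a'
  else u (fst (SE b a')) (snd (SE b a')).

(** C^infinity_alpha(d_+ S D_E): u smooth and A_+ u smooth on the torus
    (i.e. its doubly periodic lift is smooth on R^2). *)
Definition C_alpha (u : R -> R -> R) : Prop :=
  C_strip u /\ smooth2 (Aplus u).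

Definition C_alpha_plus (u : R -> R -> R) : Prop :=
  C_alpha u /\
  forall b a, - (PI / 2) <= a <= PI / 2 ->
    u (fst (SEA b a)) (snd (SEA b a)) = u b a.

Definition atanbar (a : Rbar) : R :=
  match a with
  | Finite x => atan x
  | p_infty => PI / 2
  | m_infty => - (PI / 2)
  end.

Definition tanbar (al : R) : Rbar :=
  if Rle_dec (PI / 2) al then p_infty
  else if Rle_dec al (- (PI / 2)) then m_infty
  else Finite (tan al).

Definition Psi_hf (b : R) (a : Rbar) : R * R := (b, atanbar a).

Definition muH (a : Rbar) : R :=
  match a with
  | Finite x => / sqrt (1 + x ^ 2)
  | _ => 0
  end.

Definition SHA (b : R) (a : Rbar) : R * Rbar :=
  (b + PI + 2 * atanbar a, Rbar_opp a).

Definition pullstrip (h : R -> Rbar -> R) : R -> R -> R :=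
  fun b al => h b (tanbar al).

Definition C_alpha_plus_GH (h : R -> Rbar -> R) : Prop :=
  exists u : R -> R -> R,
    periodic_b u /\ C_alpha_plus u /\
    forall b a, h b a = u (fst (Psi_hf b a)) (snd (Psi_hf b a)).

(** C^infinity(G_H) for the smooth structure making Psi_hf a diffeomorphism. *)
Definition C_GH (h : R -> Rbar -> R) : Prop := C_strip (pullstrip h).

(** Odd Taylor coefficients in mu_H vanish, in the boundary coordinates
    (theta, mu) = (beta + tan^{-1} a, mu_H) near a = +oo and a = -oo.
    Near a = +oo: alpha = tan^{-1} a = acos mu, beta = theta - acos mu.
    Near a = -oo: alpha = -acos mu, beta = theta + acos mu.
    Since h need only be smooth up to the boundary mu = 0, the Taylor
    coefficients at mu = 0 are computed through an arbitrary smooth extension F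
    of h o Psi_hf^{-1} (they do not depend on the choice of F). *)
Definition odd_taylor_vanish (h : R -> Rbar -> R) : Prop :=
  forall F : R -> R -> R, smooth2 F -> strip_ext F (pullstrip h) ->
  forall (k : nat) (th : R), Nat.Odd k ->
    Derive_n (fun m => F (th - acos m) (acos m)) k 0 = 0 /\
    Derive_n (fun m => F (th + acos m) (- acos m)) k 0 = 0.

(* Main.v *)
Require Import Defs.
From Stdlib Require Import Reals.
From Coquelicot Require Import Coquelicot.
From Stdlib Require Import Lra Lia FunctionalExtensionality List.
Open Scope R_scope.

Lemma locR (x : R) (P : R -> Prop) (e : R) :
  0 < e -> (forall t, Rabs (t - x) < e -> P t) -> locally x P.
Proof.
  intros He H. exists (mkposreal e He). intros t Ht. apply H. exact Ht.
Qed.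

Lemma locR_inv (x : R) (P : R -> Prop) :
  locally x P -> exists e, 0 < e /\ forall t, Rabs (t - x) < e -> P t.
Proof.
  intros [e He]. exists e. split. apply cond_pos. intros t Ht. apply He. exact Ht.
Qed.

Lemma exd_plus (f g : R -> R) x : ex_derive f x -> ex_derive g x ->
  ex_derive (fun t => f t + g t) x.
Proof. intros A B. exact (ex_derive_plus f g x A B). Qed.

Lemma pder_app l l' f : pder (l ++ l') f = pder l (pder l' f).
Proof. induction l as [|b l IH]; simpl; [reflexivity| rewrite IH; reflexivity]. Qed.

Lemma smooth2_pder f l' : smooth2 f -> smooth2 (pder l' f).
Proof. intros H l x y. rewrite <- pder_app. apply H. Qed.

Definition box x0 y0 e x y := Rabs (x - x0) < e /\ Rabs (y - y0) < e.

Lemma pder_loc f g x0 y0 e :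
  (forall x y, box x0 y0 e x y -> f x y = g x y) ->
  forall l x y, box x0 y0 e x y -> pder l f x y = pder l g x y.
Proof.
  intros H l. induction l as [|b l IH]; intros x y [Hx Hy]; simpl.
  - apply H; split; auto.
  - destruct b.
    + apply Derive_ext_loc. apply locR with (e - Rabs (x - x0)). lra.
      intros t Ht. apply IH. split; auto.
      replace (t - x0) with ((t - x) + (x - x0)) by ring.
      eapply Rle_lt_trans. apply Rabs_triang. lra.
    + apply Derive_ext_loc. apply locR with (e - Rabs (y - y0)). lra.
      intros t Ht. apply IH. split; auto.
      replace (t - y0) with ((t - y) + (y - y0)) by ring.
      eapply Rle_lt_trans. apply Rabs_triang. lra.
Qed.

Lemma smooth2_local f :
  (forall x0 y0, exists g e, 0 < e /\ smooth2 g /\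
     forall x y, box x0 y0 e x y -> f x y = g x y) -> smooth2 f.
Proof.
  intros H l x y. destruct (H x y) as [g [e [He [Sg Hfg]]]].
  assert (Hb : forall u v, box x y e u v -> pder l g u v = pder l f u v).
  { intros u v Huv. symmetry. apply (pder_loc f g x y e Hfg). exact Huv. }
  destruct (Sg l x y) as [H1 [H2 H3]].
  split; [|split].
  - eapply ex_derive_ext_loc; [|exact H1]. apply locR with e; auto.
    intros t Ht. apply Hb. split; auto. unfold Rminus; rewrite Rplus_opp_r, Rabs_R0; auto.
  - eapply ex_derive_ext_loc; [|exact H2]. apply locR with e; auto.
    intros t Ht. apply Hb. split; auto. unfold Rminus; rewrite Rplus_opp_r, Rabs_R0; auto.
  - eapply continuity_2d_pt_ext_loc; [|exact H3].
    exists (mkposreal e He). intros u v Hu Hv. apply Hb. split; auto.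
Qed.

Lemma smooth2_ext f g : smooth2 f -> (forall x y, f x y = g x y) -> smooth2 g.
Proof.
  intros Hf H. replace g with f. auto.
  apply functional_extensionality; intro x; apply functional_extensionality; intro y; auto.
Qed.

Lemma pder_plus f g : smooth2 f -> smooth2 g -> forall l x y,
  pder l (fun x y => f x y + g x y) x y = pder l f x y + pder l g x y.
Proof.
  intros Hf Hg l; induction l as [|b l IH]; intros x y; simpl; auto.
  destruct b.
  - rewrite (Derive_ext _ (fun t => pder l f t y + pder l g t y)) by (intro; apply IH).
    apply Derive_plus; [apply (proj1 (Hf l x y))|apply (proj1 (Hg l x y))].
  - rewrite (Derive_ext _ (fun t => pder l f x t + pder l g x t)) by (intro; apply IH).
    apply Derive_plus; [apply (proj1 (proj2 (Hf l x y)))|apply (proj1 (proj2 (Hg l x y)))].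
Qed.

Lemma pder_scal f a : forall l x y,
  pder l (fun x y => a * f x y) x y = a * pder l f x y.
Proof.
  intros l; induction l as [|b l IH]; intros x y; simpl; auto.
  destruct b.
  - rewrite (Derive_ext _ (fun t => a * pder l f t y)) by (intro; apply IH).
    apply Derive_scal.
  - rewrite (Derive_ext _ (fun t => a * pder l f x t)) by (intro; apply IH).
    apply Derive_scal.
Qed.

Lemma smooth2_plus f g : smooth2 f -> smooth2 g -> smooth2 (fun x y => f x y + g x y).
Proof.
  intros Hf Hg l x y.
  destruct (Hf l x y) as [A1 [A2 A3]]. destruct (Hg l x y) as [B1 [B2 B3]].
  split; [|split].
  - eapply ex_derive_ext. intro t. symmetry. apply pder_plus; auto.
    apply exd_plus; auto.
  - eapply ex_derive_ext. intro t. symmetry. apply pder_plus; auto.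
    apply exd_plus; auto.
  - eapply continuity_2d_pt_ext. intros u v. symmetry. apply pder_plus; auto.
    apply continuity_2d_pt_plus; auto.
Qed.

Lemma smooth2_scal f a : smooth2 f -> smooth2 (fun x y => a * f x y).
Proof.
  intros Hf l x y.
  destruct (Hf l x y) as [A1 [A2 A3]].
  split; [|split].
  - eapply ex_derive_ext. intro t. symmetry. apply pder_scal.
    apply ex_derive_scal; auto.
  - eapply ex_derive_ext. intro t. symmetry. apply pder_scal.
    apply ex_derive_scal; auto.
  - eapply continuity_2d_pt_ext. intros u v. symmetry. apply pder_scal.
    apply continuity_2d_pt_mult; auto. apply continuity_2d_pt_const.
Qed.

Lemma smooth2_ex_diff_n n : forall f, smooth2 f -> forall x y, ex_diff_n f n x y.
Proof.
  induction n as [|n IH]; intros f Hf x y; simpl.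
  - split; auto. apply (proj2 (proj2 (Hf nil x y))).
  - split; [apply (proj2 (proj2 (Hf nil x y)))|].
    split; [apply (proj1 (Hf nil x y))|].
    split; [apply (proj1 (proj2 (Hf nil x y)))|].
    split.
    + apply (IH (pder (true::nil) f)). apply smooth2_pder; auto.
    + apply (IH (pder (false::nil) f)). apply smooth2_pder; auto.
Qed.

Lemma DL_pol_1 f x y dx dy :
  DL_pol 1 f x y dx dy = f x y + Derive (fun t => f t y) x * dx + Derive (fun z => f x z) y * dy.
Proof.
  unfold DL_pol, differential, partial_derive. simpl. unfold Binomial.C; simpl. field.
Qed.

Lemma smooth2_diff f : smooth2 f -> forall x y,
  differentiable_pt_lim f x y (pder (true::nil) f x y) (pder (false::nil) f x y).
Proof.
  intros Hf x y.
  destruct (Taylor_Lagrange_2d f 1 x y) as [D [d Hd]].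
  { exists (mkposreal 1 Rlt_0_1). intros u v _ _. apply smooth2_ex_diff_n; auto. }
  intros eps.
  assert (Hp : 0 < Rmin d (eps / (Rabs D + 1))).
  { apply Rmin_pos. apply cond_pos. apply Rdiv_lt_0_compat. apply cond_pos.
    pose proof (Rabs_pos D); lra. }
  exists (mkposreal _ Hp). simpl. intros u v Hu Hv.
  assert (Hu1 : Rabs (u - x) < d) by (eapply Rlt_le_trans; [exact Hu|apply Rmin_l]).
  assert (Hv1 : Rabs (v - y) < d) by (eapply Rlt_le_trans; [exact Hv|apply Rmin_l]).
  specialize (Hd u v Hu1 Hv1). rewrite DL_pol_1 in Hd. simpl.
  set (M := Rmax (Rabs (u - x)) (Rabs (v - y))) in *.
  assert (HM : M < eps / (Rabs D + 1)).
  { unfold M. apply Rmax_lub_lt; [apply Rlt_le_trans with (1:=Hu)|apply Rlt_le_trans with (1:=Hv)]; apply Rmin_r. }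
  assert (HM0 : 0 <= M).
  { unfold M. eapply Rle_trans; [apply Rabs_pos| apply Rmax_l]. }
  replace (f u v - f x y - (Derive (fun t => f t y) x * (u - x) + Derive (fun z => f x z) y * (v - y)))
    with (f u v - (f x y + Derive (fun t => f t y) x * (u - x) + Derive (fun z => f x z) y * (v - y))) by ring.
  eapply Rle_trans; [exact Hd|].
  assert (HD : D <= Rabs D) by apply RRle_abs.
  assert (Hepsm : M * (Rabs D + 1) <= eps).
  { assert (0 < Rabs D + 1) by (pose proof (Rabs_pos D); lra).
    apply Rmult_lt_compat_r with (r := Rabs D + 1) in HM; auto.
    unfold Rdiv in HM. rewrite Rmult_assoc, Rinv_l in HM by lra. lra. }
  simpl. pose proof (Rabs_pos D). pose proof (cond_pos eps). nra.
Qed.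

Definition Lin (c d s e : R) (f : R -> R -> R) : R -> R -> R :=
  fun x y => f (x + c * y + d) (e + s * y).

Lemma diff_affine a b k x y :
  differentiable_pt_lim (fun u v => a * u + b * v + k) x y a b.
Proof.
  intros eps. exists (mkposreal 1 Rlt_0_1). intros u v _ _.
  replace (a * u + b * v + k - (a * x + b * y + k) - (a * (u - x) + b * (v - y))) with 0 by ring.
  rewrite Rabs_R0. apply Rmult_le_pos. left; apply cond_pos.
  eapply Rle_trans; [apply Rabs_pos|apply Rmax_l].
Qed.

Lemma diff_partials f x y lx ly : differentiable_pt_lim f x y lx ly ->
  is_derive (fun t => f t y) x lx /\ is_derive (fun t => f x t) y ly.
Proof.
  intros H. split; apply is_derive_Reals.
  - replace lx with (lx * 1 + ly * 0) by ring.
    apply (derivable_pt_lim_comp_2d f (fun t => t) (fun _ => y)).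
    exact H. apply derivable_pt_lim_id. apply derivable_pt_lim_const.
  - replace ly with (lx * 0 + ly * 1) by ring.
    apply (derivable_pt_lim_comp_2d f (fun _ => x) (fun t => t)).
    exact H. apply derivable_pt_lim_const. apply derivable_pt_lim_id.
Qed.

Lemma dpl_eq f x y lx ly lx' ly' : lx = lx' -> ly = ly' ->
  differentiable_pt_lim f x y lx ly -> differentiable_pt_lim f x y lx' ly'.
Proof. intros -> ->; auto. Qed.

Lemma Lin_diff c d s e g : smooth2 g -> forall x y,
  differentiable_pt_lim (Lin c d s e g) x y
    (pder (true::nil) g (x + c * y + d) (e + s * y))
    (c * pder (true::nil) g (x + c * y + d) (e + s * y) + s * pder (false::nil) g (x + c * y + d) (e + s * y)).
Proof.
  intros Hg x y.
  pose proof (differentiable_pt_lim_comp g (fun u v => 1 * u + c * v + d) (fun u v => 0 * u + s * v + e) x y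
    _ _ _ _ _ _ (smooth2_diff g Hg _ _) (diff_affine 1 c d x y) (diff_affine 0 s e x y)) as H.
  replace (1 * x + c * y + d) with (x + c * y + d) in H by ring.
  replace (0 * x + s * y + e) with (e + s * y) in H by ring.
  eapply differentiable_pt_lim_ext.
  2: { eapply dpl_eq; [| |exact H]; ring. }
  exists (mkposreal 1 Rlt_0_1). intros u v _ _. unfold Lin. f_equal; ring.
Qed.

Lemma pder_Lin c d s e f : smooth2 f -> forall l, exists g, smooth2 g /\
  forall x y, pder l (Lin c d s e f) x y = Lin c d s e g x y.
Proof.
  intros Hf l. induction l as [|b l IH].
  - exists f. split; auto.
  - destruct IH as [g [Hg Heq]]. destruct b.
    + exists (pder (true::nil) g). split. apply smooth2_pder; auto.
      intros x y. simpl.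
      rewrite (Derive_ext _ (fun t => Lin c d s e g t y)) by (intro; apply Heq).
      apply is_derive_unique. apply (proj1 (diff_partials _ _ _ _ _ (Lin_diff c d s e g Hg x y))).
    + exists (fun x y => c * pder (true::nil) g x y + s * pder (false::nil) g x y). split.
      apply smooth2_plus; apply smooth2_scal; apply smooth2_pder; auto.
      intros x y. simpl.
      rewrite (Derive_ext _ (fun t => Lin c d s e g x t)) by (intro; apply Heq).
      apply is_derive_unique. apply (proj2 (diff_partials _ _ _ _ _ (Lin_diff c d s e g Hg x y))).
Qed.

Lemma smooth2_Lin c d s e f : smooth2 f -> smooth2 (Lin c d s e f).
Proof.
  intros Hf l x y. destruct (pder_Lin c d s e f Hf l) as [g [Hg Heq]].
  pose proof (Lin_diff c d s e g Hg x y) as HD.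
  destruct (diff_partials _ _ _ _ _ HD) as [D1 D2].
  split; [|split].
  - eapply ex_derive_ext. intro t; symmetry; apply Heq. eexists; exact D1.
  - eapply ex_derive_ext. intro t; symmetry; apply Heq. eexists; exact D2.
  - eapply continuity_2d_pt_ext. intros u v; symmetry; apply Heq.
    apply differentiable_continuity_pt. do 2 eexists; exact HD.
Qed.

Fixpoint nf (l : list bool) : nat :=
  match l with nil => O | b :: l' => if b then nf l' else S (nf l') end.
Fixpoint nt (l : list bool) : nat :=
  match l with nil => O | b :: l' => if b then S (nt l') else nt l' end.

Definition Ay (e s : R) (f : R -> R -> R) : R -> R -> R := fun x y => f x (e + s * y).

Lemma smooth2_Ay e s f : smooth2 f -> smooth2 (Ay e s f).
Proof.
  intros Hf. apply smooth2_ext with (Lin 0 0 s e f). apply smooth2_Lin; auto.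
  intros x y. unfold Lin, Ay. f_equal. ring.
Qed.

Lemma Derive_affine e s y : Derive (fun t => e + s * t) y = s.
Proof. apply is_derive_unique. auto_derive; auto. ring. Qed.

Lemma ex_derive_affine e s y : ex_derive (fun t => e + s * t) y.
Proof. auto_derive. auto. Qed.

Lemma pder_Ay e s f : smooth2 f -> forall l x y,
  pder l (Ay e s f) x y = s ^ (nf l) * pder l f x (e + s * y).
Proof.
  intros Hf l. induction l as [|b l IH]; intros x y; simpl.
  - unfold Ay; ring.
  - destruct b; simpl.
    + rewrite (Derive_ext _ (fun t => s ^ nf l * pder l f t (e + s * y))) by (intro; apply IH).
      apply Derive_scal.
    + rewrite (Derive_ext _ (fun t => s ^ nf l * pder l f x (e + s * t))) by (intro; apply IH).
      rewrite Derive_scal.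
      rewrite (Derive_comp (fun z => pder l f x z) (fun t => e + s * t)).
      rewrite Derive_affine. ring.
      apply (proj1 (proj2 (Hf l x (e + s * y)))).
      apply ex_derive_affine.
Qed.

Lemma schwarz_pder f : smooth2 f -> forall x y,
  pder (true :: false :: nil) f x y = pder (false :: true :: nil) f x y.
Proof.
  intros Hf x y. simpl.
  apply Schwarz.
  - exists (mkposreal 1 Rlt_0_1). intros u v _ _.
    split; [apply (proj1 (Hf nil u v))|].
    split; [apply (proj1 (proj2 (Hf nil u v)))|].
    split; [apply (proj1 (Hf (false::nil) u v))|].
    apply (proj1 (proj2 (Hf (true::nil) u v))).
  - apply (proj2 (proj2 (Hf (true::false::nil) x y))).
  - apply (proj2 (proj2 (Hf (false::true::nil) x y))).
Qed.

Lemma comm_f_t j : forall H, smooth2 H -> forall x y,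
  pder (false :: repeat true j) H x y = pder (repeat true j) (pder (false::nil) H) x y.
Proof.
  induction j as [|j IH]; intros H Hs x y; [reflexivity|].
  change (pder (false :: true :: nil) (pder (repeat true j) H) x y =
    pder (repeat true (S j)) (pder (false :: nil) H) x y).
  rewrite <- (schwarz_pder (pder (repeat true j) H)) by (apply smooth2_pder; auto).
  simpl. apply Derive_ext. intro t. apply IH; auto.
Qed.

Lemma pder_sort l : forall H, smooth2 H -> forall x y,
  pder l H x y = pder (repeat true (nt l)) (pder (repeat false (nf l)) H) x y.
Proof.
  induction l as [|b l IH]; intros H Hs x y; [reflexivity|].
  destruct b; simpl.
  - apply Derive_ext. intro t. apply IH; auto.
  - rewrite (Derive_ext _ (fun t => pder (repeat true (nt l)) (pder (repeat false (nf l)) H) x t))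
      by (intro; apply IH; auto).
    change (Derive (fun t => pder (repeat true (nt l)) (pder (repeat false (nf l)) H) x t) y)
      with (pder (false :: repeat true (nt l)) (pder (repeat false (nf l)) H) x y).
    rewrite comm_f_t by (apply smooth2_pder; auto). reflexivity.
Qed.

Lemma pder_rf_Dn k H x y : pder (repeat false k) H x y = Derive_n (H x) k y.
Proof.
  revert y. induction k as [|k IH]; intro y; [reflexivity|].
  simpl. apply Derive_ext. intro t. apply IH.
Qed.

Lemma nf_rf k : nf (repeat false k) = k.
Proof. induction k; simpl; auto. Qed.

Lemma flat_line H c : smooth2 H ->
  (forall k x, Nat.Odd k -> Derive_n (H x) k c = 0) ->
  forall l x, Nat.Odd (nf l) -> pder l H x c = 0.
Proof.
  intros Hs Hk l x Ho. rewrite pder_sort by auto.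
  set (K := pder (repeat false (nf l)) H).
  assert (HK : forall x', K x' c = 0).
  { intro x'. unfold K. rewrite pder_rf_Dn. apply Hk; auto. }
  clearbody K. generalize (nt l) as j. intro j. revert x.
  induction j as [|j IH]; intro x; simpl; auto.
  rewrite (Derive_ext _ (fun _ => 0)) by (intro; apply IH). apply Derive_const.
Qed.

Definition glue (c : R) (f g : R -> R -> R) : R -> R -> R :=
  fun x y => if Rle_dec y c then f x y else g x y.

Lemma glue1 (p q : R -> R) c d : is_derive p c d -> is_derive q c d -> p c = q c ->
  is_derive (fun t => if Rle_dec t c then p t else q t) c d.
Proof.
  intros Hp Hq Hpq. apply is_derive_Reals in Hp. apply is_derive_Reals in Hq.
  apply is_derive_Reals. intros eps Heps.
  destruct (Hp eps Heps) as [d1 H1]. destruct (Hq eps Heps) as [d2 H2].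
  assert (Hd : 0 < Rmin d1 d2) by (apply Rmin_pos; apply cond_pos).
  exists (mkposreal _ Hd). intros h Hh0 Hh. simpl in Hh.
  destruct (Rle_dec c c) as [_|Hn]; [|lra].
  destruct (Rle_dec (c + h) c).
  - apply H1; auto. eapply Rlt_le_trans; [exact Hh| apply Rmin_l].
  - rewrite Hpq. apply H2; auto. eapply Rlt_le_trans; [exact Hh| apply Rmin_r].
Qed.

Section Glue.
Variables (c : R) (f g : R -> R -> R).
Hypotheses (Hf : smooth2 f) (Hg : smooth2 g)
  (Hline : forall l x, pder l f x c = pder l g x c).

Lemma glue_dy l x y : is_derive (fun t => glue c (pder l f) (pder l g) x t) y
  (glue c (pder (false::l) f) (pder (false::l) g) x y).
Proof.
  unfold glue. destruct (Rtotal_order y c) as [Hlt|[Heq|Hgt]].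
  - destruct (Rle_dec y c) as [_|n]; [|lra].
    eapply is_derive_ext_loc.
    2: { apply Derive_correct. apply (proj1 (proj2 (Hf l x y))). }
    apply locR with (c - y). lra. intros t Ht.
    destruct (Rle_dec t c) as [_|n]; auto. exfalso. apply Rabs_def2 in Ht. lra.
  - subst y. destruct (Rle_dec c c) as [_|n]; [|lra].
    apply glue1.
    + apply Derive_correct. apply (proj1 (proj2 (Hf l x c))).
    + rewrite (Hline (false::l)). apply Derive_correct. apply (proj1 (proj2 (Hg l x c))).
    + apply Hline.
  - destruct (Rle_dec y c) as [n|_]; [lra|].
    eapply is_derive_ext_loc.
    2: { apply Derive_correct. apply (proj1 (proj2 (Hg l x y))). }
    apply locR with (y - c). lra. intros t Ht.
    destruct (Rle_dec t c) as [n|_]; auto. exfalso. apply Rabs_def2 in Ht. lra.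
Qed.

Lemma pder_glue l : forall x y, pder l (glue c f g) x y = glue c (pder l f) (pder l g) x y.
Proof.
  induction l as [|b l IH]; intros x y; [reflexivity|].
  destruct b; simpl.
  - rewrite (Derive_ext _ (fun t => glue c (pder l f) (pder l g) t y)) by (intro; apply IH).
    unfold glue. destruct (Rle_dec y c); reflexivity.
  - rewrite (Derive_ext _ (fun t => glue c (pder l f) (pder l g) x t)) by (intro; apply IH).
    apply is_derive_unique. apply glue_dy.
Qed.

Lemma smooth2_glue : smooth2 (glue c f g).
Proof.
  intros l x y. split; [|split].
  - eapply ex_derive_ext. intro t; symmetry; apply pder_glue.
    unfold glue. destruct (Rle_dec y c). apply (proj1 (Hf l x y)). apply (proj1 (Hg l x y)).
  - eapply ex_derive_ext. intro t; symmetry; apply pder_glue.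
    eexists. apply glue_dy.
  - eapply continuity_2d_pt_ext. intros u v; symmetry; apply pder_glue.
    destruct (Rtotal_order y c) as [Hlt|[Heq|Hgt]].
    + eapply continuity_2d_pt_ext_loc. 2: apply (proj2 (proj2 (Hf l x y))).
      assert (Hp : 0 < c - y) by lra. exists (mkposreal _ Hp). simpl. intros u v _ Hv.
      unfold glue. destruct (Rle_dec v c) as [_|n]; auto. apply Rabs_def2 in Hv. lra.
    + subst y. intros eps.
      destruct (proj2 (proj2 (Hf l x c)) eps) as [d1 H1].
      destruct (proj2 (proj2 (Hg l x c)) eps) as [d2 H2].
      assert (Hd : 0 < Rmin d1 d2) by (apply Rmin_pos; apply cond_pos).
      exists (mkposreal _ Hd). simpl. intros u v Hu Hv.
      unfold glue. destruct (Rle_dec c c) as [_|n]; [|lra].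
      destruct (Rle_dec v c).
      * apply H1; (eapply Rlt_le_trans; [eassumption|apply Rmin_l]).
      * rewrite (Hline l). apply H2; (eapply Rlt_le_trans; [eassumption|apply Rmin_r]).
    + eapply continuity_2d_pt_ext_loc. 2: apply (proj2 (proj2 (Hg l x y))).
      assert (Hp : 0 < y - c) by lra. exists (mkposreal _ Hp). simpl. intros u v _ Hv.
      unfold glue. destruct (Rle_dec v c) as [n|_]; auto. apply Rabs_def2 in Hv. lra.
Qed.
End Glue.

Definition openP (U : R -> Prop) := forall y, U y -> exists e, 0 < e /\ forall z, Rabs (z - y) < e -> U z.
Definition Pk (U : R -> Prop) (f : R -> R) (k : nat) := forall y, U y -> ex_derive (Derive_n f k) y.
Definition Sm U f := forall k, Pk U f k.

Lemma open_loc U y (P : R -> Prop) : openP U -> U y -> (forall z, U z -> P z) -> locally y P.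
Proof.
  intros HU Hy H. destruct (HU y Hy) as [e [He He']]. apply locR with e; auto.
Qed.

Lemma Dn_ext_open U f g : openP U -> (forall y, U y -> f y = g y) ->
  forall k y, U y -> Derive_n f k y = Derive_n g k y.
Proof.
  intros HU H k y Hy. apply Derive_n_ext_loc. apply open_loc with U; auto.
Qed.

Lemma Pk_ext U f g k : openP U -> (forall y, U y -> f y = g y) -> Pk U f k -> Pk U g k.
Proof.
  intros HU H Hf y Hy. eapply ex_derive_ext_loc; [|apply Hf; auto].
  apply open_loc with U; auto. intros z Hz. apply Dn_ext_open with U; auto.
Qed.

Lemma Derive_n_S f k y : Derive_n f (S k) y = Derive_n (Derive f) k y.
Proof.
  rewrite <- Nat.add_1_r. rewrite <- (Derive_n_comp f k 1). reflexivity.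
Qed.

Lemma Derive_n_S_fun f k : Derive_n f (S k) = Derive_n (Derive f) k.
Proof. apply functional_extensionality. intro; apply Derive_n_S. Qed.

Lemma Pk_S U f k : Pk U f (S k) <-> Pk U (Derive f) k.
Proof. unfold Pk. rewrite Derive_n_S_fun. tauto. Qed.

Lemma Pk_S1 U f k : Pk U f (S k) -> Pk U (Derive f) k.
Proof. exact (proj1 (Pk_S U f k)). Qed.
Lemma Pk_S2 U f k : Pk U (Derive f) k -> Pk U f (S k).
Proof. exact (proj2 (Pk_S U f k)). Qed.

Lemma Pk_deriv U f d k : openP U -> (forall y, U y -> Derive f y = d y) -> Pk U d k -> Pk U f (S k).
Proof.
  intros HU H Hd. apply Pk_S2. apply (Pk_ext U d (Derive f) k HU); [intros; symmetry; auto|exact Hd].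
Qed.

Lemma Sm_deriv U f : Sm U f -> Sm U (Derive f).
Proof. intros H k. apply Pk_S1. exact (H (S k)). Qed.

Lemma Dn0 f : Derive_n f 0 = f.
Proof. reflexivity. Qed.

Lemma Pk_0 U f : Pk U f 0 <-> forall y, U y -> ex_derive f y.
Proof. unfold Pk. rewrite Dn0. tauto. Qed.

Lemma Pk0E U f y : Pk U f 0 -> U y -> ex_derive f y.
Proof. intros H Hy. apply (proj1 (Pk_0 U f)); auto. Qed.

Lemma exn_Pk U f k y : (forall j, (j < k)%nat -> Pk U f j) -> U y ->
  forall j, (j <= k)%nat -> ex_derive_n f j y.
Proof.
  intros H Hy j Hj. destruct j as [|j]; cbv beta iota delta [ex_derive_n]; [exact I|]. apply (H j); [lia|exact Hy].
Qed.

Lemma exd_plus' (f g : R -> R) x : ex_derive f x -> ex_derive g x ->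
  ex_derive (fun t => f t + g t) x.
Proof. intros A B. exact (ex_derive_plus f g x A B). Qed.

Lemma Dn_plus_open U f g k y : openP U -> (forall j, (j < k)%nat -> Pk U f j) ->
  (forall j, (j < k)%nat -> Pk U g j) -> U y ->
  Derive_n (fun t => f t + g t) k y = Derive_n f k y + Derive_n g k y.
Proof.
  intros HU Hf Hg Hy. apply Derive_n_plus.
  - apply open_loc with U; auto. intros z Hz. apply exn_Pk with U; auto.
  - apply open_loc with U; auto. intros z Hz. apply exn_Pk with U; auto.
Qed.

Lemma Pk_plus U f g k : openP U -> (forall j, (j <= k)%nat -> Pk U f j) ->
  (forall j, (j <= k)%nat -> Pk U g j) -> Pk U (fun t => f t + g t) k.
Proof.
  intros HU Hf Hg y Hy.
  eapply ex_derive_ext_loc.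
  2: { apply exd_plus'. apply Hf; auto. apply Hg; auto. }
  apply open_loc with U; auto. intros z Hz. symmetry. apply Dn_plus_open with U; auto.
  intros; apply Hf; lia. intros; apply Hg; lia.
Qed.

Lemma Pk_scal U f a k : Pk U f k -> Pk U (fun t => a * f t) k.
Proof.
  intros Hf y Hy. eapply ex_derive_ext. intro t. symmetry. apply Derive_n_scal_l.
  apply ex_derive_scal. apply Hf; auto.
Qed.

Lemma Sm_plus U f g : openP U -> Sm U f -> Sm U g -> Sm U (fun t => f t + g t).
Proof. intros HU Hf Hg k. apply Pk_plus; auto. Qed.

Lemma Sm_scal U f a : Sm U f -> Sm U (fun t => a * f t).
Proof. intros Hf k. apply Pk_scal; auto. Qed.

Lemma Pk_mult U k : openP U -> forall f g, (forall j, (j <= k)%nat -> Pk U f j) ->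
  (forall j, (j <= k)%nat -> Pk U g j) -> forall j, (j <= k)%nat -> Pk U (fun t => f t * g t) j.
Proof.
  intros HU. induction k as [|k IH]; intros f g Hf Hg j Hj.
  - assert (j = 0%nat) by lia. subst j. apply (proj2 (Pk_0 _ _)). intros y Hy.
    apply ex_derive_mult; eapply Pk0E; eauto.
  - destruct (Nat.eq_dec j (S k)) as [->|Hne].
    2: { apply IH; [intros i Hi; apply Hf; lia|intros i Hi; apply Hg; lia|lia]. }
    apply Pk_deriv with (fun t => Derive f t * g t + f t * Derive g t); [exact HU| |].
    + intros y Hy. apply Derive_mult; eapply Pk0E; eauto; [apply Hf|apply Hg]; lia.
    + apply Pk_plus; [exact HU| |].
      * apply IH. intros i Hi; apply Pk_S1; apply Hf; lia. intros i Hi; apply Hg; lia.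
      * apply IH. intros i Hi; apply Hf; lia. intros i Hi; apply Pk_S1; apply Hg; lia.
Qed.

Lemma Sm_mult U f g : openP U -> Sm U f -> Sm U g -> Sm U (fun t => f t * g t).
Proof. intros HU Hf Hg k. apply (Pk_mult U k); auto. Qed.

Lemma Pk_comp U V k : openP U -> openP V -> forall f g, Sm V f -> (forall y, U y -> V (g y)) ->
  (forall j, (j <= k)%nat -> Pk U g j) -> forall j, (j <= k)%nat -> Pk U (fun t => f (g t)) j.
Proof.
  intros HU HV. induction k as [|k IH]; intros f g Hf HUV Hg j Hj.
  - assert (j = 0%nat) by lia. subst j. apply (proj2 (Pk_0 _ _)). intros y Hy.
    apply ex_derive_comp; eapply Pk0E; eauto.
  - destruct (Nat.eq_dec j (S k)) as [->|Hne].
    2: { apply IH; [exact Hf|exact HUV|intros i Hi; apply Hg; lia|lia]. }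
    apply Pk_deriv with (fun t => Derive g t * Derive f (g t)); [exact HU| |].
    + intros y Hy. apply Derive_comp.
      * eapply Pk0E. apply (Hf 0%nat). apply HUV; exact Hy.
      * eapply Pk0E. apply Hg; lia. exact Hy.
    + apply (Pk_mult U k); [exact HU| | |lia].
      * intros i Hi; apply Pk_S1; apply Hg; lia.
      * intros i Hi. apply (IH (Derive f) g); [apply Sm_deriv; exact Hf|exact HUV| |lia].
        intros; apply Hg; lia.
Qed.

Lemma Sm_comp U V f g : openP U -> openP V -> Sm V f -> Sm U g -> (forall y, U y -> V (g y)) ->
  Sm U (fun t => f (g t)).
Proof. intros HU HV Hf Hg HUV k. apply (Pk_comp U V k HU HV f g); auto. Qed.

Lemma Sm_sub U U' f : (forall y, U y -> U' y) -> Sm U' f -> Sm U f.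
Proof. intros H Hf k y Hy. apply Hf; auto. Qed.

Lemma Sm_const U a : Sm U (fun _ => a).
Proof.
  intros k y Hy. destruct k. simpl. apply ex_derive_const.
  eapply ex_derive_ext. intro t. symmetry. apply Derive_n_const. apply ex_derive_const.
Qed.

Lemma Sm_id U : openP U -> Sm U (fun t => t).
Proof.
  intros HU k. destruct k. apply (proj2 (Pk_0 _ _)). intros; apply ex_derive_id.
  apply Pk_deriv with (fun _ => 1). exact HU. intros y _. apply is_derive_unique.
  apply is_derive_Reals. apply derivable_pt_lim_id. apply Sm_const.
Qed.

Lemma openT : openP (fun _ => True).
Proof. intros y _. exists 1. split; auto; lra. Qed.

Lemma Sm_sin_cos k : Pk (fun _ => True) sin k /\ Pk (fun _ => True) cos k.
Proof.
  induction k as [|k [IHs IHc]].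
  - split; apply Pk_0; intros y _; [exists (cos y); apply is_derive_sin| exists (- sin y); apply is_derive_cos].
  - split.
    + apply Pk_deriv with cos. apply openT. 2: exact IHc. intros y _. apply is_derive_unique, is_derive_sin.
    + apply Pk_deriv with (fun t => -1 * sin t). apply openT.
      intros y _. rewrite (is_derive_unique _ _ _ (is_derive_cos y)). ring.
      apply Pk_scal; auto.
Qed.

Lemma Sm_cos U : Sm U cos.
Proof. intros k y _. apply (proj2 (Sm_sin_cos k)); auto. Qed.

Definition Upos (y : R) := 0 < y.
Lemma open_pos : openP Upos.
Proof.
  intros y Hy. exists y. split; auto. intros z Hz. apply Rabs_def2 in Hz. unfold Upos; lra.
Qed.

Lemma Sm_inv : Sm Upos (fun t => / t).
Proof.
  intro k. cut (forall k j, (j <= k)%nat -> Pk Upos (fun t => / t) j).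
  { intros H; apply (H k k); lia. } clear k.
  induction k as [|k IH]; intros j Hj.
  - assert (j = 0%nat) by lia. subst j. apply (proj2 (Pk_0 _ _)). intros y Hy.
    unfold Upos in Hy. auto_derive. lra.
  - destruct (Nat.eq_dec j (S k)) as [->|Hne]; [|apply IH; lia].
    apply Pk_deriv with (fun t => -1 * (/ t * / t)); [apply open_pos| |].
    + intros y Hy. unfold Upos in Hy. apply is_derive_unique.
      auto_derive. lra. field. lra.
    + apply Pk_scal. apply (Pk_mult Upos k open_pos); [exact IH|exact IH|lia].
Qed.

Lemma Sm_sqrt : Sm Upos sqrt.
Proof.
  intro k. cut (forall k j, (j <= k)%nat -> Pk Upos sqrt j).
  { intros H; apply (H k k); lia. } clear k.
  induction k as [|k IH]; intros j Hj.
  - assert (j = 0%nat) by lia. subst j. apply (proj2 (Pk_0 _ _)). intros y Hy.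
    unfold Upos in Hy. auto_derive. lra.
  - destruct (Nat.eq_dec j (S k)) as [->|Hne]; [|apply IH; lia].
    apply Pk_deriv with (fun t => / 2 * (/ sqrt t)); [apply open_pos| |].
    + intros y Hy. unfold Upos in Hy. apply is_derive_unique.
      auto_derive. lra. pose proof (sqrt_lt_R0 y Hy). field. lra.
    + apply Pk_scal. apply (Pk_comp Upos Upos k open_pos open_pos (fun t => / t) sqrt); [exact Sm_inv| |exact IH|lia].
      intros y Hy. apply sqrt_lt_R0. exact Hy.
Qed.

Definition UT (y : R) := True.
Definition Uac (y : R) := -1 < y < 1.
Definition U0 (y : R) := 0 < y < PI.

Lemma openUT : openP UT.
Proof. intros y _. exists 1. split. lra. intros; exact I. Qed.

Lemma openUac : openP Uac.
Proof.
  intros y Hy. unfold Uac in *. exists (Rmin (y + 1) (1 - y)). split.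
  apply Rmin_pos; lra. intros z Hz. apply Rabs_def2 in Hz.
  pose proof (Rmin_l (y+1) (1-y)). pose proof (Rmin_r (y+1) (1-y)). lra.
Qed.

Lemma openU0 : openP U0.
Proof.
  intros y Hy. unfold U0 in *. exists (Rmin y (PI - y)). split.
  apply Rmin_pos; lra. intros z Hz. apply Rabs_def2 in Hz.
  pose proof (Rmin_l y (PI-y)). pose proof (Rmin_r y (PI-y)). lra.
Qed.

Lemma Sm_ext U f g : openP U -> (forall y, U y -> f y = g y) -> Sm U f -> Sm U g.
Proof. intros HU H Hf k. apply Pk_ext with f; auto. Qed.

Lemma Sm_affine U a b : openP U -> Sm U (fun t => a * t + b).
Proof.
  intros HU. apply Sm_plus; auto. apply Sm_scal. apply Sm_id; auto. apply Sm_const.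
Qed.

Lemma Sm_UT U f : Sm UT f -> Sm U f.
Proof. intros H k y _. apply H. exact I. Qed.

Lemma Sm_acos : Sm Uac acos.
Proof.
  assert (Hq : Sm Uac (fun t => sqrt (1 - t * t))).
  { apply Sm_comp with Upos. apply openUac. apply open_pos. apply Sm_sqrt.
    apply Sm_ext with (fun t => 1 + -1 * (t * t)). apply openUac. intros; ring.
    apply Sm_plus. apply openUac. apply Sm_const. apply Sm_scal. apply Sm_mult. apply openUac.
    apply Sm_id, openUac. apply Sm_id, openUac.
    intros y Hy. unfold Uac, Upos in *. nra. }
  assert (Hd : Sm Uac (fun t => -1 * / sqrt (1 - t * t))).
  { apply Sm_scal. apply (Sm_comp Uac Upos (fun t => / t)). apply openUac. apply open_pos.
    apply Sm_inv. exact Hq. intros y Hy. unfold Uac, Upos in *. apply sqrt_lt_R0. nra. }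
  intro k. destruct k.
  - apply (proj2 (Pk_0 _ _)). intros y Hy. unfold Uac in Hy.
    exists (-1 / sqrt (1 - y²)). apply is_derive_Reals.
    apply (proj1 (derive_pt_eq acos y _ (derivable_pt_acos y Hy))). apply derive_pt_acos.
  - apply Pk_deriv with (fun t => -1 * / sqrt (1 - t * t)). apply openUac.
    2: apply Hd.
    intros y Hy. apply is_derive_unique. unfold Uac in Hy. apply is_derive_Reals.
    replace (-1 * / sqrt (1 - y * y)) with (-1 / sqrt (1 - y²)) by (unfold Rsqr, Rdiv; ring).
    apply (proj1 (derive_pt_eq acos y _ (derivable_pt_acos y Hy))). apply derive_pt_acos.
Qed.

Lemma Dn_affine f a b : Sm UT f -> forall k x,
  Derive_n (fun t => f (a * t + b)) k x = a ^ k * Derive_n f k (a * x + b).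
Proof.
  intros Hf k. induction k as [|k IH]; intro x.
  - simpl. ring.
  - simpl. rewrite (Derive_ext _ (fun t => a ^ k * Derive_n f k (a * t + b))) by (intro; apply IH).
    rewrite Derive_scal.
    rewrite (Derive_comp (Derive_n f k) (fun t => a * t + b)).
    + replace (Derive (fun t => a * t + b) x) with a. ring.
      symmetry. apply is_derive_unique. auto_derive; auto. ring.
    + apply Hf. exact I.
    + auto_derive. auto.
Qed.

Lemma flat_comp_aux U V g x0 : openP U -> openP V -> Sm U g -> (forall y, U y -> V (g y)) -> U x0 ->
  forall k f c, Sm V f -> (forall j, Derive_n f j (g x0) = 0) -> Sm U c ->
  Derive_n (fun t => f (g t) * c t) k x0 = 0.
Proof.
  intros HU HV Hg HUV Hx0 k. induction k as [|k IH]; intros f c Hf Hflat Hc.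
  - simpl. specialize (Hflat 0%nat). simpl in Hflat. rewrite Hflat. ring.
  - rewrite Derive_n_S.
    assert (Hfg : Sm U (fun t => f (g t))) by (apply Sm_comp with V; auto).
    rewrite (Dn_ext_open U _ (fun t => (Derive f (g t) * (Derive g t * c t)) + f (g t) * Derive c t)); auto.
    2: { intros y Hy. rewrite Derive_mult. rewrite Derive_comp. ring.
         apply (Pk0E V f (g y) (Hf 0%nat)); auto.
         apply (Pk0E U g y (Hg 0%nat)); auto.
         apply (Pk0E U _ y (Hfg 0%nat)); auto.
         apply (Pk0E U c y (Hc 0%nat)); auto. }
    assert (HA : Derive_n (fun t => Derive f (g t) * (Derive g t * c t)) k x0 = 0).
    { apply IH. apply Sm_deriv; auto. intro j. rewrite <- Derive_n_S. apply Hflat.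
      apply Sm_mult; auto. apply Sm_deriv; auto. }
    assert (HB : Derive_n (fun t => f (g t) * Derive c t) k x0 = 0).
    { apply IH; auto. apply Sm_deriv; auto. }
    rewrite Dn_plus_open with (U := U); auto.
    + rewrite HA, HB. ring.
    + intros j _. apply Sm_mult; auto. apply Sm_comp with V; auto. apply Sm_deriv; auto.
      apply Sm_mult; auto. apply Sm_deriv; auto.
    + intros j _. apply Sm_mult; auto. apply Sm_deriv; auto.
Qed.

Lemma flat_comp U V f g x0 : openP U -> openP V -> Sm V f -> Sm U g -> (forall y, U y -> V (g y)) -> U x0 ->
  (forall j, Derive_n f j (g x0) = 0) -> forall k, Derive_n (fun t => f (g t)) k x0 = 0.
Proof.
  intros HU HV Hf Hg HUV Hx0 Hflat k.
  rewrite (Derive_n_ext _ (fun t => f (g t) * (fun _ => 1) t)) by (intro; ring).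
  apply (flat_comp_aux U V g x0); auto. apply Sm_const.
Qed.

Lemma pow_m1_cases k : (Nat.Odd k /\ (-1) ^ k = -1) \/ (Nat.Even k /\ (-1) ^ k = 1).
Proof.
  destruct (Nat.Even_or_Odd k) as [[n ->]|[n ->]].
  - right. split. exists n; auto. apply pow_1_even.
  - left. split. exists n; auto. rewrite Nat.add_1_r. apply pow_1_odd.
Qed.

Lemma Sm_refl chi : Sm UT chi -> Sm UT (fun a => chi (-1 * a + PI)).
Proof.
  intros Hc. apply (Sm_comp UT UT chi (fun a => -1 * a + PI) openUT openUT Hc).
  apply Sm_affine, openUT. intros; exact I.
Qed.

Lemma Dn_refl chi k : Sm UT chi ->
  Derive_n (fun a => chi a + -1 * chi (-1 * a + PI)) k (PI / 2) =
  Derive_n chi k (PI / 2) - (-1) ^ k * Derive_n chi k (PI / 2).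
Proof.
  intros Hc.
  pose proof (Sm_refl chi Hc) as Hc'.
  rewrite (Dn_plus_open UT); [| exact openUT | intros j _; apply Hc | intros j _; apply Pk_scal; apply Hc' | exact I].
  rewrite Derive_n_scal_l. rewrite (Dn_affine chi (-1) PI Hc).
  replace (-1 * (PI / 2) + PI) with (PI / 2) by field. ring.
Qed.

Lemma Dn_odd_part U phi k : openP U -> Sm U phi -> U 0 -> (forall y, U y -> U (- y)) ->
  Derive_n (fun m => phi m + -1 * phi (- m)) k 0 = Derive_n phi k 0 - (-1) ^ k * Derive_n phi k 0.
Proof.
  intros HU Hp H0 Hneg.
  assert (Hp' : Sm U (fun m => phi (- m))).
  { apply (Sm_comp U U phi (fun m => - m) HU HU Hp); [|exact Hneg].
    apply (Sm_ext U (fun t => -1 * t + 0)); [exact HU|intros; ring|]. apply Sm_affine; exact HU. }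
  rewrite (Dn_plus_open U); [| exact HU | intros j _; apply Hp | intros j _; apply Pk_scal; apply Hp' | exact H0].
  rewrite Derive_n_scal_l. rewrite Derive_n_comp_opp. rewrite Ropp_0. ring.
  apply (open_loc U); [exact HU| rewrite Ropp_0; exact H0|].
  intros z Hz. apply (exn_Pk U phi k z); [intros j _; apply Hp|exact Hz].
Qed.

Lemma Uac_neg y : Uac y -> Uac (- y).
Proof. unfold Uac; lra. Qed.

Lemma Uac_0 : Uac 0.
Proof. unfold Uac; lra. Qed.

Lemma Sm_chi_acos chi : Sm UT chi -> Sm Uac (fun m => chi (acos m)).
Proof.
  intros Hc. apply (Sm_comp Uac UT chi acos openUac openUT Hc Sm_acos). intros; exact I.
Qed.

Lemma L1 chi : Sm UT chi -> (forall k, Nat.Odd k -> Derive_n chi k (PI / 2) = 0) ->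
  forall k, Nat.Odd k -> Derive_n (fun m => chi (acos m)) k 0 = 0.
Proof.
  intros Hc Hodd k Hk.
  set (delta := fun a => chi a + -1 * chi (-1 * a + PI)).
  assert (Hd : Sm UT delta).
  { apply (Sm_plus UT). exact openUT. exact Hc. apply Sm_scal. apply Sm_refl; exact Hc. }
  assert (Hflat : forall j, Derive_n delta j (acos 0) = 0).
  { intro j. rewrite acos_0. unfold delta. rewrite Dn_refl by exact Hc.
    destruct (pow_m1_cases j) as [[Ho ->]|[He ->]].
    - rewrite (Hodd j Ho). ring.
    - ring. }
  set (phi := fun m => chi (acos m)).
  assert (Hphi : Sm Uac phi) by (apply Sm_chi_acos; exact Hc).
  assert (He : forall j, Derive_n (fun m => phi m + -1 * phi (- m)) j 0 = 0).
  { intro j. rewrite (Derive_n_ext _ (fun m => delta (acos m))).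
    apply (flat_comp Uac UT delta acos 0 openUac openUT Hd Sm_acos); [intros; exact I|exact Uac_0|exact Hflat].
    intro m. unfold phi, delta. rewrite acos_opp. f_equal. f_equal. f_equal. ring. }
  specialize (He k). rewrite (Dn_odd_part Uac phi k openUac Hphi Uac_0 Uac_neg) in He.
  destruct (pow_m1_cases k) as [[Ho Hp]|[Hev _]].
  - rewrite Hp in He. fold phi. lra.
  - exfalso. apply (Nat.Even_Odd_False k); auto.
Qed.

Lemma cos_U0 y : U0 y -> Uac (cos y).
Proof.
  unfold U0, Uac. intros [H1 H2]. pose proof (sin_gt_0 y H1 H2). pose proof (sin2_cos2 y).
  unfold Rsqr in *. split; nra.
Qed.

Lemma L2 chi : Sm UT chi -> (forall k, Nat.Odd k -> Derive_n (fun m => chi (acos m)) k 0 = 0) ->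
  forall k, Nat.Odd k -> Derive_n chi k (PI / 2) = 0.
Proof.
  intros Hc Hodd k Hk.
  set (phi := fun m => chi (acos m)).
  assert (Hphi : Sm Uac phi) by (apply Sm_chi_acos; exact Hc).
  set (eps := fun m => phi m + -1 * phi (- m)).
  assert (Heps : Sm Uac eps).
  { apply (Sm_plus Uac). exact openUac. exact Hphi. apply Sm_scal.
    apply (Sm_comp Uac Uac phi (fun m => - m) openUac openUac Hphi); [|exact Uac_neg].
    apply (Sm_ext Uac (fun t => -1 * t + 0)); [exact openUac|intros; ring|]. apply Sm_affine; exact openUac. }
  assert (Hflat : forall j, Derive_n eps j (cos (PI / 2)) = 0).
  { intro j. rewrite cos_PI2. unfold eps. rewrite (Dn_odd_part Uac phi j openUac Hphi Uac_0 Uac_neg).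
    destruct (pow_m1_cases j) as [[Ho ->]|[He ->]].
    - unfold phi. rewrite (Hodd j Ho). ring.
    - ring. }
  assert (PI2 : U0 (PI / 2)) by (unfold U0; pose proof PI_RGT_0; lra).
  pose proof (flat_comp U0 Uac eps cos (PI / 2) openU0 openUac Heps (Sm_cos U0) cos_U0 PI2 Hflat k) as Hk'.
  rewrite (Dn_ext_open U0 _ (fun a => chi a + -1 * chi (-1 * a + PI))) in Hk'; [| exact openU0 | | exact PI2].
  - rewrite (Dn_refl chi k Hc) in Hk'.
    destruct (pow_m1_cases k) as [[Ho Hp]|[Hev _]].
    + rewrite Hp in Hk'. lra.
    + exfalso. apply (Nat.Even_Odd_False k); auto.
  - intros y Hy. unfold eps, phi. unfold U0 in Hy.
    rewrite acos_opp, acos_cos by lra. f_equal. f_equal. f_equal. ring.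
Qed.

Definition Gf (F : R -> R -> R) : R -> R -> R := fun x y => F (x - y) y.

Lemma smooth2_Gf F : smooth2 F -> smooth2 (Gf F).
Proof.
  intros HF. apply smooth2_ext with (Lin (-1) 0 1 0 F). apply smooth2_Lin; exact HF.
  intros x y. unfold Lin, Gf. f_equal; ring.
Qed.

Lemma Sm_section G x : smooth2 G -> Sm UT (G x).
Proof.
  intros HG k y _.
  eapply ex_derive_ext. intro t. apply pder_rf_Dn.
  apply (proj1 (proj2 (HG (repeat false k) x y))).
Qed.

Lemma eq_side P Q x c s d : continuity_2d_pt P x c -> continuity_2d_pt Q x c -> 0 < d ->
  (s = 1 \/ s = -1) -> (forall h, 0 < h < d -> P x (c + s * h) = Q x (c + s * h)) ->
  P x c = Q x c.
Proof.
  intros HP HQ Hd Hs H.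
  destruct (Req_dec (P x c) (Q x c)) as [E|Hne]; auto. exfalso.
  assert (Hpos : 0 < Rabs (P x c - Q x c) / 2).
  { apply Rdiv_lt_0_compat; [apply Rabs_pos_lt; lra|lra]. }
  destruct (HP (mkposreal _ Hpos)) as [d1 H1]. destruct (HQ (mkposreal _ Hpos)) as [d2 H2].
  simpl in H1, H2.
  set (h := Rmin d (Rmin d1 d2) / 2).
  assert (Hm : 0 < Rmin d (Rmin d1 d2)).
  { apply Rmin_pos; auto. apply Rmin_pos; apply cond_pos. }
  assert (Hh0 : 0 < h) by (unfold h; lra).
  assert (Hh1 : h < d) by (unfold h; pose proof (Rmin_l d (Rmin d1 d2)); lra).
  assert (Hh2 : h < d1) by (unfold h; pose proof (Rmin_r d (Rmin d1 d2)); pose proof (Rmin_l d1 d2); lra).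
  assert (Hh3 : h < d2) by (unfold h; pose proof (Rmin_r d (Rmin d1 d2)); pose proof (Rmin_r d1 d2); lra).
  assert (Hx : Rabs (x - x) < d1) by (rewrite Rminus_diag, Rabs_R0; apply cond_pos).
  assert (Hx' : Rabs (x - x) < d2) by (rewrite Rminus_diag, Rabs_R0; apply cond_pos).
  assert (Hy : Rabs (c + s * h - c) = h).
  { replace (c + s * h - c) with (s * h) by ring. rewrite Rabs_mult.
    assert (Rabs s = 1) as ->. { destruct Hs as [-> | ->]; [apply Rabs_R1|rewrite Rabs_left; lra]. }
    rewrite Rabs_pos_eq; lra. }
  specialize (H1 x (c + s * h) Hx ltac:(lra)). specialize (H2 x (c + s * h) Hx' ltac:(lra)).
  rewrite (H h (conj Hh0 Hh1)) in H1.
  assert (Rabs (P x c - Q x c) <= Rabs (Q x (c + s * h) - P x c) + Rabs (Q x (c + s * h) - Q x c)).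
  { replace (P x c - Q x c) with (-(Q x (c + s * h) - P x c) + (Q x (c + s * h) - Q x c)) by ring.
    eapply Rle_trans. apply Rabs_triang. rewrite Rabs_Ropp. lra. }
  lra.
Qed.

Lemma Int_part_spec r (z : Z) : IZR z <= r < IZR z + 1 -> Int_part r = z.
Proof.
  intros [H1 H2]. unfold Int_part.
  rewrite <- (tech_up r (z + 1)). ring.
  rewrite plus_IZR; lra. rewrite plus_IZR; lra.
Qed.

Lemma red_z a (z : Z) : -(PI/2) + 2 * PI * IZR z <= a < 3 * (PI / 2) + 2 * PI * IZR z ->
  red_alpha a = a - 2 * PI * IZR z.
Proof.
  intros H. pose proof PI_RGT_0 as HPI.
  unfold red_alpha, frac_part.
  set (r := (a + PI / 2) / (2 * PI)).
  assert (Hr : a + PI / 2 = 2 * PI * r) by (unfold r; field; lra).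
  assert (Hr1 : IZR z <= r).
  { apply Rmult_le_reg_l with (2 * PI). lra. rewrite <- Hr. set (q := 2 * PI * IZR z) in *. clearbody q r. lra. }
  assert (Hr2 : r < IZR z + 1).
  { apply Rmult_lt_reg_l with (2 * PI). lra. rewrite <- Hr. rewrite Rmult_plus_distr_l, Rmult_1_r.
    set (q := 2 * PI * IZR z) in *. clearbody q r. lra. }
  rewrite (Int_part_spec r z) by lra.
  replace (2 * PI * (r - IZR z) - PI / 2) with (2 * PI * r - PI / 2 - 2 * PI * IZR z) by ring.
  rewrite <- Hr. ring.
Qed.

Lemma periodic_Z (u : R -> R -> R) : periodic_b u -> forall a (n : Z) b, u (b + 2 * PI * IZR n) a = u b a.
Proof.
  intros Hp a n. induction n using Z.peano_ind; intro b.
  - f_equal. simpl. ring.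
  - rewrite <- (IHn b). rewrite <- Z.add_1_r, plus_IZR.
    replace (b + 2 * PI * (IZR n + 1)) with ((b + 2 * PI * IZR n) + 2 * PI) by ring. apply Hp.
  - rewrite <- (IHn b). rewrite <- Z.sub_1_r, minus_IZR.
    replace (b + 2 * PI * IZR n) with ((b + 2 * PI * (IZR n - 1)) + 2 * PI) by ring. symmetry. apply Hp.
Qed.

Section Vval.
Variables (u F : R -> R -> R).
Hypotheses (Hper : periodic_b u) (HuF : forall b a, -(PI/2) <= a <= PI/2 -> u b a = F b a).

Lemma Vval (z : Z) x y : -(PI/2) + 2 * PI * IZR z <= y < 3 * (PI / 2) + 2 * PI * IZR z ->
  Aplus u (x - y) y = if Rle_dec (y - 2 * PI * IZR z) (PI / 2) then Gf F x (y - 2 * PI * IZR z)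
                      else Gf F x (PI - (y - 2 * PI * IZR z)).
Proof.
  intros Hy. unfold Aplus. rewrite (red_z y z Hy). cbv zeta.
  set (w := y - 2 * PI * IZR z).
  destruct (Rle_dec w (PI / 2)) as [Hw|Hw].
  - unfold Gf. rewrite <- HuF by (unfold w in *; split; lra).
    replace (x - y) with ((x - w) + 2 * PI * IZR (- z)) by (unfold w; rewrite opp_IZR; ring).
    apply periodic_Z; auto.
  - unfold SE, Gf. simpl. rewrite <- HuF by (unfold w in *; split; lra).
    replace (x - y + PI + 2 * w) with ((x - (PI - w)) + 2 * PI * IZR (1 - z))
      by (unfold w; rewrite minus_IZR; simpl; ring).
    apply periodic_Z; auto.
Qed.
End Vval.

Lemma side_eq A B x0 c s e : smooth2 A -> smooth2 B -> 0 < e -> (s = 1 \/ s = -1) ->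
  (forall x y, box x0 (c + s * e) e x y -> A x y = B x y) ->
  forall l, pder l A x0 c = pder l B x0 c.
Proof.
  intros HA HB He Hs Hbox l.
  apply (eq_side (pder l A) (pder l B) x0 c s e).
  - apply (proj2 (proj2 (HA l x0 c))).
  - apply (proj2 (proj2 (HB l x0 c))).
  - exact He.
  - exact Hs.
  - intros h Hh. apply (pder_loc A B x0 (c + s * e) e Hbox). split.
    + rewrite Rminus_diag, Rabs_R0; exact He.
    + replace (c + s * h - (c + s * e)) with (s * (h - e)) by ring.
      rewrite Rabs_mult. assert (Rabs s = 1) as ->.
      { destruct Hs as [-> | ->]; [apply Rabs_R1|rewrite Rabs_left; lra]. }
      rewrite Rabs_left by lra. lra.
Qed.

Definition Vof (u : R -> R -> R) : R -> R -> R := fun x y => Aplus u (x - y) y.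

Lemma smooth2_Vof u : smooth2 (Aplus u) -> smooth2 (Vof u).
Proof.
  intros HW. apply smooth2_ext with (Lin (-1) 0 1 0 (Aplus u)). apply smooth2_Lin; exact HW.
  intros x y. unfold Lin, Vof. f_equal; ring.
Qed.

Section Forward.
Variables (u F : R -> R -> R).
Hypotheses (Hper : periodic_b u) (HuF : forall b a, -(PI/2) <= a <= PI/2 -> u b a = F b a)
  (HW : smooth2 (Aplus u)) (HF : smooth2 F).

Lemma Vval0 x y : -(PI/2) <= y < 3 * (PI / 2) ->
  Vof u x y = if Rle_dec y (PI / 2) then Gf F x y else Gf F x (PI - y).
Proof.
  intros Hy. unfold Vof. rewrite (Vval u F Hper HuF 0%Z x y); simpl IZR;
  replace (y - 2 * PI * 0) with y by ring. reflexivity. lra.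
Qed.

Lemma Vvalm1 x y : -(PI/2) - 2 * PI <= y < 3 * (PI / 2) - 2 * PI ->
  Vof u x y = if Rle_dec (y + 2 * PI) (PI / 2) then Gf F x (y + 2 * PI) else Gf F x (PI - (y + 2 * PI)).
Proof.
  intros Hy. unfold Vof. rewrite (Vval u F Hper HuF (-1)%Z x y).
  replace (y - 2 * PI * IZR (-1)) with (y + 2 * PI) by (simpl; ring). reflexivity.
  replace (IZR (-1)) with (-1) by reflexivity. lra.
Qed.

Lemma forward_flat x k : Nat.Odd k ->
  Derive_n (Gf F x) k (PI / 2) = 0 /\ Derive_n (Gf F x) k (- (PI / 2)) = 0.
Proof.
  intros Hk. pose proof PI_RGT_0 as HPI.
  assert (HV : smooth2 (Vof u)) by (apply smooth2_Vof; exact HW).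
  assert (HG : smooth2 (Gf F)) by (apply smooth2_Gf; exact HF).
  assert (Hpk : (-1) ^ k = -1).
  { destruct (pow_m1_cases k) as [[_ H]|[He _]]; auto. exfalso; apply (Nat.Even_Odd_False k); auto. }
  rewrite <- !pder_rf_Dn.
  split.
  - assert (B1 : forall x' y, box x (PI / 2 + -1 * (PI / 4)) (PI / 4) x' y -> Vof u x' y = Gf F x' y).
    { intros x' y [_ Hy]. apply Rabs_def2 in Hy. rewrite Vval0 by lra.
      destruct (Rle_dec y (PI / 2)); [reflexivity|lra]. }
    assert (B2 : forall x' y, box x (PI / 2 + 1 * (PI / 4)) (PI / 4) x' y -> Vof u x' y = Ay PI (-1) (Gf F) x' y).
    { intros x' y [_ Hy]. apply Rabs_def2 in Hy. rewrite Vval0 by lra.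
      destruct (Rle_dec y (PI / 2)); [lra|]. unfold Ay. f_equal. ring. }
    pose proof (side_eq (Vof u) (Gf F) x (PI / 2) (-1) (PI / 4) HV HG ltac:(lra) (or_intror eq_refl) B1 (repeat false k)) as E1.
    pose proof (side_eq (Vof u) (Ay PI (-1) (Gf F)) x (PI / 2) 1 (PI / 4) HV (smooth2_Ay _ _ _ HG) ltac:(lra) (or_introl eq_refl) B2 (repeat false k)) as E2.
    rewrite E1 in E2.
    rewrite pder_Ay, nf_rf, Hpk in E2 by exact HG.
    replace (PI + -1 * (PI / 2)) with (PI / 2) in E2 by field. lra.
  - assert (B1 : forall x' y, box x (- (PI / 2) + 1 * (PI / 4)) (PI / 4) x' y -> Vof u x' y = Gf F x' y).
    { intros x' y [_ Hy]. apply Rabs_def2 in Hy. rewrite Vval0 by lra.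
      destruct (Rle_dec y (PI / 2)); [reflexivity|lra]. }
    assert (B2 : forall x' y, box x (- (PI / 2) + -1 * (PI / 4)) (PI / 4) x' y -> Vof u x' y = Ay (- PI) (-1) (Gf F) x' y).
    { intros x' y [_ Hy]. apply Rabs_def2 in Hy. rewrite Vvalm1 by lra.
      destruct (Rle_dec (y + 2 * PI) (PI / 2)); [lra|]. unfold Ay. f_equal. ring. }
    pose proof (side_eq (Vof u) (Gf F) x (- (PI / 2)) 1 (PI / 4) HV HG ltac:(lra) (or_introl eq_refl) B1 (repeat false k)) as E1.
    pose proof (side_eq (Vof u) (Ay (- PI) (-1) (Gf F)) x (- (PI / 2)) (-1) (PI / 4) HV (smooth2_Ay _ _ _ HG) ltac:(lra) (or_intror eq_refl) B2 (repeat false k)) as E2.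
    rewrite E1 in E2.
    rewrite pder_Ay, nf_rf, Hpk in E2 by exact HG.
    replace (- PI + -1 * - (PI / 2)) with (- (PI / 2)) in E2 by field. lra.
Qed.
End Forward.

Lemma glue_cond G c' w e1 e2 : smooth2 G ->
  (forall l x, Nat.Odd (nf l) -> pder l G x w = 0) ->
  e1 + 1 * c' = w -> e2 + -1 * c' = w ->
  forall l x, pder l (Ay e1 1 G) x c' = pder l (Ay e2 (-1) G) x c'.
Proof.
  intros HG Hfl H1 H2 l x. rewrite !pder_Ay by exact HG. rewrite H1, H2, pow1.
  destruct (pow_m1_cases (nf l)) as [[Ho _]|[_ ->]].
  - rewrite (Hfl l x Ho). ring.
  - ring.
Qed.

Section Backward.
Variables (u F : R -> R -> R).
Hypotheses (Hper : periodic_b u) (HuF : forall b a, -(PI/2) <= a <= PI/2 -> u b a = F b a)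
  (HF : smooth2 F)
  (HfP : forall x k, Nat.Odd k -> Derive_n (Gf F x) k (PI / 2) = 0)
  (HfM : forall x k, Nat.Odd k -> Derive_n (Gf F x) k (- (PI / 2)) = 0).

Lemma smooth2_Vof_back : smooth2 (Vof u).
Proof.
  pose proof PI_RGT_0 as HPI.
  assert (HG : smooth2 (Gf F)) by (apply smooth2_Gf; exact HF).
  assert (flatP : forall l x, Nat.Odd (nf l) -> pder l (Gf F) x (PI / 2) = 0).
  { apply flat_line; [exact HG|intros k x Hk; apply HfP; exact Hk]. }
  assert (flatM : forall l x, Nat.Odd (nf l) -> pder l (Gf F) x (- (PI / 2)) = 0).
  { apply flat_line; [exact HG|intros k x Hk; apply HfM; exact Hk]. }
  apply smooth2_local. intros x0 y0.
  pose proof (base_Int_part ((y0 + PI / 2) / (2 * PI))) as [Hb1 Hb2].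
  remember (Int_part ((y0 + PI / 2) / (2 * PI))) as z eqn:Hz. clear Hz.
  assert (Hr : -(PI/2) <= y0 - 2 * PI * IZR z < 3 * (PI / 2)).
  { assert (E : y0 + PI / 2 = 2 * PI * ((y0 + PI / 2) / (2 * PI))) by (field; lra).
    split.
    - apply Rmult_le_compat_l with (r := 2 * PI) in Hb1; [|lra]. lra.
    - assert (Hb3 : (y0 + PI / 2) / (2 * PI) < IZR z + 1) by lra.
      apply Rmult_lt_compat_l with (r := 2 * PI) in Hb3; [|lra]. lra. }
  unfold Vof.
  destruct (Rtotal_order (y0 - 2 * PI * IZR z) (PI / 2)) as [Hlt|[Heq|Hgt]].
  - destruct (Rtotal_order (y0 - 2 * PI * IZR z) (- (PI / 2))) as [Hlt'|[Heq'|Hgt']].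
    + lra.
    +
      exists (glue y0 (Ay (PI + 2 * PI * (IZR z - 1)) (-1) (Gf F)) (Ay (- (2 * PI * IZR z)) 1 (Gf F))).
      exists (PI / 2). split; [lra|split].
      * apply smooth2_glue; try (apply smooth2_Ay; exact HG).
        intros l x. symmetry. apply (glue_cond (Gf F) y0 (- (PI / 2))); auto; lra.
      * intros x y [_ Hy]. apply Rabs_def2 in Hy. unfold glue.
        destruct (Rle_dec y y0) as [Hyy|Hyy].
        -- destruct (Req_dec y y0) as [->|Hne].
           ++ rewrite (Vval u F Hper HuF z) by lra.
              destruct (Rle_dec (y0 - 2 * PI * IZR z) (PI / 2)); [|lra].
              unfold Ay. f_equal. lra.
           ++ rewrite (Vval u F Hper HuF (z - 1)) by (rewrite minus_IZR; simpl IZR; lra).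
              rewrite minus_IZR. simpl IZR.
              destruct (Rle_dec (y - 2 * PI * (IZR z - 1)) (PI / 2)); [lra|].
              unfold Ay. f_equal. ring.
        -- rewrite (Vval u F Hper HuF z) by lra.
           destruct (Rle_dec (y - 2 * PI * IZR z) (PI / 2)); [|lra].
           unfold Ay. f_equal. ring.
    +
      exists (Ay (- (2 * PI * IZR z)) 1 (Gf F)).
      exists (Rmin (y0 - 2 * PI * IZR z + PI / 2) (PI / 2 - (y0 - 2 * PI * IZR z))).
      split; [apply Rmin_pos; lra|split; [apply smooth2_Ay; exact HG|]].
      intros x y [_ Hy]. apply Rabs_def2 in Hy.
      pose proof (Rmin_l (y0 - 2 * PI * IZR z + PI / 2) (PI / 2 - (y0 - 2 * PI * IZR z))).
      pose proof (Rmin_r (y0 - 2 * PI * IZR z + PI / 2) (PI / 2 - (y0 - 2 * PI * IZR z))).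
      rewrite (Vval u F Hper HuF z) by lra.
      destruct (Rle_dec (y - 2 * PI * IZR z) (PI / 2)); [|lra].
      unfold Ay. f_equal. ring.
  -
    exists (glue y0 (Ay (- (2 * PI * IZR z)) 1 (Gf F)) (Ay (PI + 2 * PI * IZR z) (-1) (Gf F))).
    exists (PI / 2). split; [lra|split].
    + apply smooth2_glue; try (apply smooth2_Ay; exact HG).
      intros l x. apply (glue_cond (Gf F) y0 (PI / 2)); auto; lra.
    + intros x y [_ Hy]. apply Rabs_def2 in Hy. unfold glue.
      rewrite (Vval u F Hper HuF z) by lra.
      destruct (Rle_dec y y0); destruct (Rle_dec (y - 2 * PI * IZR z) (PI / 2)); try lra;
        unfold Ay; f_equal; ring.
  -
    exists (Ay (PI + 2 * PI * IZR z) (-1) (Gf F)).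
    exists (Rmin (y0 - 2 * PI * IZR z - PI / 2) (3 * (PI / 2) - (y0 - 2 * PI * IZR z))).
    split; [apply Rmin_pos; lra|split; [apply smooth2_Ay; exact HG|]].
    intros x y [_ Hy]. apply Rabs_def2 in Hy.
    pose proof (Rmin_l (y0 - 2 * PI * IZR z - PI / 2) (3 * (PI / 2) - (y0 - 2 * PI * IZR z))).
    pose proof (Rmin_r (y0 - 2 * PI * IZR z - PI / 2) (3 * (PI / 2) - (y0 - 2 * PI * IZR z))).
    rewrite (Vval u F Hper HuF z) by lra.
    destruct (Rle_dec (y - 2 * PI * IZR z) (PI / 2)); [lra|].
    unfold Ay. f_equal. ring.
Qed.

Lemma smooth2_Aplus_back : smooth2 (Aplus u).
Proof.
  apply smooth2_ext with (Lin 1 0 1 0 (Vof u)). apply smooth2_Lin. apply smooth2_Vof_back.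
  intros x y. unfold Lin, Vof. f_equal; ring.
Qed.
End Backward.

Lemma atanbar_tanbar a : -(PI/2) <= a <= PI/2 -> atanbar (tanbar a) = a.
Proof.
  intros Ha. unfold tanbar.
  destruct (Rle_dec (PI / 2) a); [simpl; lra|].
  destruct (Rle_dec a (- (PI / 2))); [simpl; lra|].
  simpl. apply atan_tan. lra.
Qed.

Lemma tanbar_atanbar a : tanbar (atanbar a) = a.
Proof.
  pose proof PI_RGT_0. destruct a as [x| |]; simpl; unfold tanbar.
  - pose proof (atan_bound x).
    destruct (Rle_dec (PI / 2) (atan x)); [lra|].
    destruct (Rle_dec (atan x) (- (PI / 2))); [lra|].
    rewrite tan_atan; reflexivity.
  - destruct (Rle_dec (PI / 2) (PI / 2)); [reflexivity|lra].
  - destruct (Rle_dec (PI / 2) (- (PI / 2))); [lra|].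
    destruct (Rle_dec (- (PI / 2)) (- (PI / 2))); [reflexivity|lra].
Qed.

Lemma atanbar_opp a : atanbar (Rbar_opp a) = - atanbar a.
Proof. destruct a as [x| |]; simpl; [apply atan_opp|reflexivity|ring]. Qed.

Lemma atanbar_bound a : -(PI/2) <= atanbar a <= PI/2.
Proof.
  pose proof PI_RGT_0. destruct a as [x| |]; simpl; [pose proof (atan_bound x)|..]; lra.
Qed.

Lemma tanbar_opp a : -(PI/2) <= a <= PI/2 -> tanbar (- a) = Rbar_opp (tanbar a).
Proof.
  intros Ha. pose proof PI_RGT_0. unfold tanbar.
  destruct (Rle_dec (PI / 2) a); destruct (Rle_dec a (- (PI / 2)));
  destruct (Rle_dec (PI / 2) (- a)); destruct (Rle_dec (- a) (- (PI / 2))); simpl; try lra;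
  try reflexivity.
  rewrite tan_neg. reflexivity.
Qed.

Theorem lemma2p1 (h : R -> Rbar -> R) (hper : periodic_b h) :
  C_alpha_plus_GH h <->
  (C_GH h /\
   (forall (b : R) (a : Rbar), h b a = h (fst (SHA b a)) (snd (SHA b a))) /\
   odd_taylor_vanish h).
Proof.
  split.
  - intros [u [Hper [[[Cs Hsm] Hsea] Hh]]].
    simpl in Hh.
    assert (Hpu : forall b a, -(PI/2) <= a <= PI/2 -> pullstrip h b a = u b a).
    { intros b a Ha. unfold pullstrip. rewrite Hh. rewrite atanbar_tanbar by exact Ha. reflexivity. }
    split; [|split].
    + destruct Cs as [F [SF HF]]. exists F. split; [exact SF|].
      intros b a Ha. rewrite HF by exact Ha. symmetry. apply Hpu. exact Ha.
    + intros b a. rewrite !Hh. simpl. rewrite atanbar_opp.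
      symmetry. apply (Hsea b (atanbar a) (atanbar_bound a)).
    + intros F SF HF k th Hk.
      assert (HuF : forall b a, -(PI/2) <= a <= PI/2 -> u b a = F b a).
      { intros b a Ha. rewrite <- Hpu by exact Ha. symmetry. apply HF. exact Ha. }
      assert (HG : smooth2 (Gf F)) by (apply smooth2_Gf; exact SF).
      split.
      * apply (L1 (Gf F th)); [apply Sm_section; exact HG| |exact Hk].
        intros j Hj. apply (proj1 (forward_flat u F Hper HuF Hsm SF th j Hj)).
      * set (psi := fun a => Gf F th (-1 * a + 0)).
        assert (Hpsi : Sm UT psi).
        { apply (Sm_comp UT UT (Gf F th) (fun a => -1 * a + 0) openUT openUT).
          apply Sm_section; exact HG. apply Sm_affine; exact openUT. intros; exact I. }
        rewrite (Derive_n_ext _ (fun m => psi (acos m))).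
        2: { intro m. unfold psi, Gf. f_equal; ring. }
        apply (L1 psi Hpsi); [|exact Hk].
        intros j Hj. unfold psi. rewrite (Dn_affine (Gf F th) (-1) 0) by (apply Sm_section; exact HG).
        replace (-1 * (PI / 2) + 0) with (- (PI / 2)) by ring.
        rewrite (proj2 (forward_flat u F Hper HuF Hsm SF th j Hj)). ring.
  - intros [[F [SF HF]] [Hsha Hodd]].
    exists (pullstrip h).
    assert (HuF : forall b a, -(PI/2) <= a <= PI/2 -> pullstrip h b a = F b a).
    { intros b a Ha. symmetry. apply HF. exact Ha. }
    assert (Hper : periodic_b (pullstrip h)).
    { intros b a. unfold pullstrip. apply hper. }
    assert (HG : smooth2 (Gf F)) by (apply smooth2_Gf; exact SF).
    split; [exact Hper|split; [split; [split|]|]].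
    + exists F. split; [exact SF|exact HF].
    + apply (smooth2_Aplus_back (pullstrip h) F Hper HuF SF).
      * intros x k Hk. apply (L2 (Gf F x)); [apply Sm_section; exact HG| |exact Hk].
        intros j Hj. apply (proj1 (Hodd F SF HF j x Hj)).
      * intros x k Hk.
        set (psi := fun a => Gf F x (-1 * a + 0)).
        assert (Hpsi : Sm UT psi).
        { apply (Sm_comp UT UT (Gf F x) (fun a => -1 * a + 0) openUT openUT).
          apply Sm_section; exact HG. apply Sm_affine; exact openUT. intros; exact I. }
        assert (Hk' : Derive_n psi k (PI / 2) = 0).
        { apply (L2 psi Hpsi); [|exact Hk].
          intros j Hj. rewrite (Derive_n_ext _ (fun m => F (x + acos m) (- acos m))).
          apply (proj2 (Hodd F SF HF j x Hj)).
          intro m. unfold psi, Gf. f_equal; ring. }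
        unfold psi in Hk'. rewrite (Dn_affine (Gf F x) (-1) 0) in Hk' by (apply Sm_section; exact HG).
        replace (-1 * (PI / 2) + 0) with (- (PI / 2)) in Hk' by ring.
        assert (Hnz : (-1) ^ k <> 0) by (apply pow_nonzero; lra).
        apply Rmult_integral in Hk'. destruct Hk' as [Hc|Hc]; [contradiction|exact Hc].
    + intros b a Ha. unfold SEA, pullstrip. simpl.
      rewrite (Hsha b (tanbar a)). simpl. rewrite atanbar_tanbar by exact Ha.
      rewrite tanbar_opp by exact Ha. reflexivity.
    + intros b a. simpl. unfold pullstrip. rewrite tanbar_atanbar. reflexivity.
Qed.
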